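(* Let $n\ge2$ and let $P_X$ be a probability distribution on $[0,1]$ with $P_X((0,1))>0$. Let $q_y:=\int\binom{n}{y}x^y(1-x)^{n-y}\,dP_X(x)$, $y=0,\dots,n$, be the induced output pmf. Then $q_y>0$ for all $y$, and for every $y\in\{1,\dots,n-1\}$, \[ \frac{q_{y+1}\,q_{y-1}}{q_y^2}\ \ge\ \frac{y(n-y)}{(y+1)(n-y+1)}. \] *)

(* Defs.v *)
From HB Require Import structures.
From mathcomp Require Import all_boot all_order all_algebra.
From mathcomp Require Import all_classical all_reals all_analysis.
Set Implicit Arguments. Unset Strict Implicit. Unset Printing Implicit Defensive.
Import Order.TTheory GRing.Theory Num.Theory.
Local Open Scope ring_scope.
Local Open Scope classical_set_scope.

Definition binom_kernel (R : realType) (n y : nat) (x : R) : R :=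
  ('C(n, y))%:R * x ^+ y * (1 - x) ^+ (n - y).

Definition out_pmf (R : realType) (P : probability R R) (n y : nat) : R :=
  Rintegral P `[0%R, 1%R] (binom_kernel n y).

(* Main.v *)
Require Import Defs.
From HB Require Import structures.
From mathcomp Require Import all_boot all_order all_algebra.
From mathcomp Require Import all_classical all_reals all_analysis.
From mathcomp Require Import measurable_realfun ring zify.
Import Order.TTheory GRing.Theory Num.Theory.
Local Open Scope ring_scope.
Local Open Scope classical_set_scope.

Lemma posP (R : realType) (P : probability R R) (f : R -> R) :
  P.-integrable `[0%R,1%R] (EFin \o f) ->
  (forall x, 0 <= x <= 1 -> 0 <= f x) ->
  (forall x, 0 < x < 1 -> 0 < f x) ->
  (0 < P `]0%R, 1%R[)%E ->
  0 < Rintegral P `[0%R,1%R] f.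
Proof.
move=> hi f0 fp hP.
have mD : measurable (`[0%R,1%R] : set R) by [].
have fin := integrable_fin_num mD hi.
have ge0 : (0 <= \int[P]_(x in `[0%R,1%R]) (f x)%:E)%E.
  by apply: integral_ge0 => x; rewrite /= in_itv /= => /f0; rewrite lee_fin.
rewrite /Rintegral; move: fin ge0.
set I := (\int[P]_(x in _) _)%E.
case E : I => [r| |] //= _; rewrite lee_fin le_eqVlt => /predU1P[r0|//].
exfalso.
have : (\int[P]_(x in `[0%R,1%R]) `|(EFin \o f) x| = 0)%E.
  rewrite -(_ : I = 0%E); last by rewrite E -r0.
  apply: eq_integral => x; rewrite inE /= in_itv /= => /f0 h.
  by rewrite ger0_norm.
move/(ae_eq_integral_abs P mD (proj1 (integrableP _ _ _ hi))).
case=> N [mN PN0 sub].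
have : (P `]0%R, 1%R[ <= P N)%E.
  apply: le_measure; rewrite ?inE //.
  move=> x; rewrite /= in_itv /= => /andP[x0 x1]; apply: sub => /=.
  move=> /(_ _); rewrite /= in_itv /= (ltW x0) (ltW x1) => /(_ isT) /eqP.
  by rewrite /cst eqe (gt_eqF (fp x _)) // x0 x1.
by rewrite PN0 leNgt hP.
Qed.
Lemma intP (R : realType) (P : probability R R) (f : R -> R) (M : R) :
  measurable_fun setT f -> (forall x, 0 <= x <= 1 -> `|f x| <= M) ->
  P.-integrable `[0%R,1%R] (EFin \o f).
Proof.
move=> mf hM; apply: measurable_bounded_integrable => //.
- by rewrite (le_lt_trans (probability_le1 _ _)) ?ltry.
- exact: measurable_funS mf.
- exists M; split; first by rewrite num_real.
  move=> M' hM' x /=; rewrite in_itv /= => hx.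
  exact: le_trans (hM _ hx) (ltW hM').
Qed.

Definition G (R : realType) (a b : nat) (x : R) : R := x ^+ a * (1 - x) ^+ b.
Arguments G {R}.

Lemma mG (R : realType) a b : measurable_fun setT (@G R a b).
Proof.
apply/measurable_funM => //; apply/measurable_funX => //.
exact: measurable_funB.
Qed.

Lemma G_ge0 (R : realType) a b (x : R) : 0 <= x <= 1 -> 0 <= G a b x.
Proof. by case/andP=> x0 x1; rewrite /G mulr_ge0 // exprn_ge0 // subr_ge0. Qed.

Lemma G_gt0 (R : realType) a b (x : R) : 0 < x < 1 -> 0 < G a b x.
Proof. by case/andP=> x0 x1; rewrite /G mulr_gt0 // exprn_gt0 // subr_gt0. Qed.

Lemma G_le1 (R : realType) a b (x : R) : 0 <= x <= 1 -> `|G a b x| <= 1.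
Proof.
move=> hx; rewrite ger0_norm ?G_ge0 //; case/andP: hx => x0 x1.
rewrite /G mulr_ile1 ?exprn_ge0 ?subr_ge0 ?exprn_ile1 ?subr_ge0 //.
by rewrite lerBlDr lerDl.
Qed.

Lemma iG (R : realType) (P : probability R R) a b :
  P.-integrable `[0%R,1%R] (EFin \o G a b).
Proof. by apply: (@intP _ _ _ (1)); [exact: mG| exact: G_le1]. Qed.

Lemma iZG (R : realType) (P : probability R R) (c : R) a b :
  P.-integrable `[0%R,1%R] (EFin \o (fun x => c * G a b x)).
Proof.
apply: (@intP _ _ _ (`|c|)).
  by apply/measurable_funM => //; exact: mG.
move=> x hx; rewrite normrM -[leRHS]mulr1 ler_wpM2l //; exact: G_le1.
Qed.

Lemma iZGB (R : realType) (P : probability R R) (c d : R) a b a' b' :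
  P.-integrable `[0%R,1%R] (EFin \o (fun x => c * G a b x - d * G a' b' x)).
Proof.
apply: (@intP _ _ _ (`|c| + `|d|)).
  by apply/measurable_funB => //; apply/measurable_funM => //; exact: mG.
move=> x hx; rewrite (le_trans (ler_normB _ _)) // lerD //.
  rewrite normrM -[leRHS]mulr1 ler_wpM2l //; exact: G_le1.
rewrite normrM -[leRHS]mulr1 ler_wpM2l //; exact: G_le1.
Qed.

Lemma G_pos (R : realType) (P : probability R R) a b :
  (0 < P `]0%R, 1%R[)%E -> 0 < Rintegral P `[0%R,1%R] (G a b).
Proof.
move=> hP; apply: posP => //; [exact: iG | exact: G_ge0 | exact: G_gt0].
Qed.

Lemma cs (R : realType) (P : probability R R) (k j : nat) :
  (0 < P `]0%R, 1%R[)%E ->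
  Rintegral P `[0%R,1%R] (G (k.+1) (j.+1)) ^+ 2 <=
  Rintegral P `[0%R,1%R] (G (k.+2) j) * Rintegral P `[0%R,1%R] (G k (j.+2)).
Proof.
move=> hP.
set A := Rintegral P _ (G k.+2 j).
set B := Rintegral P _ (G k.+1 j.+1).
set C := Rintegral P _ (G k j.+2).
have A0 : 0 < A by exact: G_pos.
pose t := B / A.
have H : 0 <= t ^+ 2 * A - (2 * t) * B + C.
  have mD : measurable (`[0%R,1%R] : set R) by [].
  rewrite /A /B /C -!RintegralZl //; try exact: iG.
  rewrite -RintegralB //; try exact: iZG.
  rewrite -RintegralD //; [|exact: iZGB|exact: iG].
  apply: Rintegral_ge0 => x; rewrite /= in_itv /= => hx.
  have -> : t ^+ 2 * G k.+2 j x - 2 * t * G k.+1 j.+1 x + G k j.+2 x =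
     G k j x * (t * x - (1 - x)) ^+ 2.
    by rewrite /G !exprS; ring.
  by rewrite mulr_ge0 ?G_ge0 // sqr_ge0.
have : 0 <= C - B ^+ 2 / A.
  by move: H; rewrite /t; congr (0 <= _); field; rewrite gt_eqF.
rewrite subr_ge0 ler_pdivrMr //.
by rewrite mulrC.
Qed.

Lemma opG (R : realType) (P : probability R R) n y :
  out_pmf P n y = ('C(n, y))%:R * Rintegral P `[0%R,1%R] (G y (n - y)).
Proof.
rewrite /out_pmf -RintegralZl //; last exact: iG.
by apply: eq_Rintegral => x _; rewrite /binom_kernel /G mulrA.
Qed.

Theorem mainTheorem13 (R : realType) (n : nat) (hn : (2 <= n)%N)
  (P : probability R R)
  (hsupp : P `[0%R, 1%R] = 1%E)
  (hint : (0 < P `]0%R, 1%R[)%E) :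
  (forall y : nat, (y <= n)%N -> 0 < out_pmf P n y) /\
  (forall y : nat, (1 <= y)%N -> (y <= n - 1)%N ->
     (y * (n - y))%:R / ((y + 1) * (n - y + 1))%:R
       <= out_pmf P n y.+1 * out_pmf P n y.-1 / out_pmf P n y ^+ 2).
Proof.
split.
  move=> y yn; rewrite opG mulr_gt0 ?G_pos // ltr0n bin_gt0 //.
case=> [//|k] _ hk.
set j := (n - k.+2)%N.
have en : n = (k.+2 + j)%N by rewrite /j; lia.
have e1 : (n - k.+2 = j)%N by [].
have e2 : (n - k.+1 = j.+1)%N by lia.
have e3 : (n - k = j.+2)%N by lia.
have b1 := mul_bin_left n k.+1.
have b2 := mul_bin_left n k.
rewrite !opG /= e1 e2 e3.
rewrite -/j e2 in b1; rewrite e3 in b2.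
have hcs := @cs _ P k j hint.
set A := Rintegral P _ (G k.+2 j) in hcs *.
set B := Rintegral P _ (G k.+1 j.+1) in hcs *.
set C := Rintegral P _ (G k j.+2) in hcs *.
have A0 : 0 < A by exact: G_pos.
have B0 : 0 < B by exact: G_pos.
have C0 : 0 < C by exact: G_pos.
set c1 := 'C(n, k.+2) in b1 *.
set c2 := 'C(n, k.+1) in b1 b2 *.
set c3 := 'C(n, k) in b2 *.
have c20 : (0 < c2)%N by rewrite bin_gt0; lia.
have r1 : (c1%:R : R) = j.+1%:R * c2%:R / k.+2%:R.
  by rewrite -natrM -b1 natrM mulrC mulKf // pnatr_eq0.
have r2 : (c3%:R : R) = k.+1%:R * c2%:R / j.+2%:R.
  by rewrite -natrM b2 natrM mulrC mulKf // pnatr_eq0.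
rewrite r1 r2 !addn1.
set L := _ / _.
have -> : j.+1%:R * c2%:R / k.+2%:R * A * (k.+1%:R * c2%:R / j.+2%:R * C) /
    (c2%:R * B) ^+ 2 = L * (A * C / B ^+ 2).
  rewrite /L !natrM; field.
  by rewrite gt_eqF //= -!natrD !pnatr_eq0 -lt0n; apply/and3P; split; lia.
rewrite ler_pMr; last by rewrite /L divr_gt0 // ltr0n.
by rewrite ler_pdivlMr ?exprn_gt0 // mul1r.
Qed.
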